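(* Let $\Sigma$ be a finite set of tokens, $c$ a context, $M_1,M_2$ language models, $f$ a min-bounded function with constant $\lambda_f$, $M=DAGG_f(M_1,M_2)$, and $t\in\Sigma$ a token. Then $t$ is $\le\gamma$-exposed by $M$ over $M_1$ at $c$ and $\le\gamma$-exposed by $M$ over $M_2$ at $c$, where $$\gamma=\lambda_f\,\overline{f_c}(M_1,M_2)\le\lambda_f\sqrt{MAE_c(M_1,M_2)}.$$
   Context: Let $n=|\Sigma|$. A context is a finite sequence of tokens from $\Sigma$. A language model $M$ assigns to every context $c$ and token $t\in\Sigma$ a probability $p_M(t\mid c)>0$, with $\sum_{t\in\Sigma}p_M(t\mid c)=1$. For $g:\Sigma\to\mathbb{R}_{>0}$, $GM(g(t)):=\exp\big(\tfrac1n\sum_{t\in\Sigma}\log g(t)\big)$. Typical probability: $tp_c(M):=GM(p_M(t\mid c))$; relative probability: $rp_M(t\mid c):=p_M(t\mid c)/tp_c(M)$. Typical probability ratio: $tpr_c(M_1,M_2):=GM\big(\tfrac{p_{M_1}(t\mid c)}{p_{M_2}(t\mid c)}\big)$. A token $t$ is $\alpha$-exposed by $M_1$ over $M_2$ at $c$ if $\frac{p_{M_1}(t\mid c)}{p_{M_2}(t\mid c)\cdot tpr_c(M_1,M_2)}=\alpha$; it is $\le\alpha$-exposed if it is $\beta$-exposed for some $\beta\le\alpha$. A function $f:\mathbb{R}_{>0}^2\to\mathbb{R}_{>0}$ is proper-avg if $\min(x,y)\le f(x,y)\le\max(x,y)$ for all $x,y>0$; it is min-bounded if it is proper-avg and there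 is a constant $\lambda_f$ with $f(x,y)\le\lambda_f\min(x,y)$ for all $x,y>0$. Set $M(t\mid c):=f(rp_{M_1}(t\mid c),rp_{M_2}(t\mid c))$; $DAGG_f(M_1,M_2)$ is the language model $M$ with $p_M(t\mid c):=\frac{M(t\mid c)}{\sum_{t'\in\Sigma}M(t'\mid c)}$. Define $\overline{f_c}(M_1,M_2):=GM\big(M(t\mid c)^{-1}\big)$ and $MAE_c(M_1,M_2):=GM\Big(\max\Big(\tfrac{rp_{M_1}(t\mid c)}{rp_{M_2}(t\mid c)},\tfrac{rp_{M_2}(t\mid c)}{rp_{M_1}(t\mid c)}\Big)\Big)$. *)

(* Defs.v *)
From HB Require Import structures.
From mathcomp Require Import all_boot all_order all_algebra.
From mathcomp Require Import all_classical all_reals all_analysis.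
Set Implicit Arguments. Unset Strict Implicit. Unset Printing Implicit Defensive.
Import Order.TTheory GRing.Theory Num.Theory.
Local Open Scope ring_scope.

Section Defs.
Variables (R : realType) (T : finType).
(* tokens: the finite type T (Sigma); contexts: seq T;
   a language model is represented by its probability function p c t. *)
Definition model := seq T -> T -> R.

Definition is_LM (p : model) : Prop :=
  (forall c t, 0 < p c t) /\ (forall c, \sum_(t : T) p c t = 1).

Definition GM (g : T -> R) : R := expR ((#|T|%:R)^-1 * \sum_(t : T) ln (g t)).

Definition tp (p : model) (c : seq T) : R := GM (fun t => p c t).
Definition rp (p : model) (c : seq T) (t : T) : R := p c t / tp p c.
Definition tpr (p1 p2 : model) (c : seq T) : R := GM (fun t => p1 c t / p2 c t).

Definition exposed (p1 p2 : model) (c : seq T) (t : T) (a : R) : Prop :=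
  p1 c t / (p2 c t * tpr p1 p2 c) = a.
Definition le_exposed (p1 p2 : model) (c : seq T) (t : T) (a : R) : Prop :=
  exists b, b <= a /\ exposed p1 p2 c t b.

Definition proper_avg (f : R -> R -> R) : Prop :=
  forall x y, 0 < x -> 0 < y -> Num.min x y <= f x y <= Num.max x y.
Definition min_bounded_with (f : R -> R -> R) (lam : R) : Prop :=
  proper_avg f /\ forall x y, 0 < x -> 0 < y -> f x y <= lam * Num.min x y.

Definition Mval (f : R -> R -> R) (p1 p2 : model) (c : seq T) (t : T) : R :=
  f (rp p1 c t) (rp p2 c t).
Definition DAGG (f : R -> R -> R) (p1 p2 : model) : model :=
  fun c t => Mval f p1 p2 c t / \sum_(t' : T) Mval f p1 p2 c t'.
Definition fbar (f : R -> R -> R) (p1 p2 : model) (c : seq T) : R :=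
  GM (fun t => (Mval f p1 p2 c t)^-1).
Definition MAE (p1 p2 : model) (c : seq T) : R :=
  GM (fun t => Num.max (rp p1 c t / rp p2 c t) (rp p2 c t / rp p1 c t)).
End Defs.

(* Main.v *)
Require Import Defs.
From mathcomp Require Import all_boot all_order all_algebra.
From mathcomp Require Import all_classical all_reals all_analysis.
Import Order.TTheory GRing.Theory Num.Theory.
Local Open Scope ring_scope.
From mathcomp Require Import ring lra.

Section GMl.
Variables (R : realType) (T : finType).
Implicit Types g h : T -> R.

Lemma GM_gt0 g : 0 < GM g.
Proof. exact: expR_gt0. Qed.

Lemma GM_M g h : (forall t, 0 < g t) -> (forall t, 0 < h t) ->
  GM (fun t => g t * h t) = GM g * GM h.
Proof.
move=> gp hp; rewrite /GM -expRD -mulrDr -big_split /=; congr (expR (_ * _)).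
by apply: eq_bigr => i _; rewrite lnM // posrE.
Qed.

Lemma GM_V g : (forall t, 0 < g t) -> GM (fun t => (g t)^-1) = (GM g)^-1.
Proof.
move=> gp; rewrite /GM -expRN -mulrN -sumrN; congr (expR (_ * _)).
by apply: eq_bigr => i _; rewrite lnV // posrE.
Qed.

Lemma GM_cst (k : R) (t0 : T) : 0 < k -> GM (fun _ : T => k) = k.
Proof.
move=> kp; rewrite /GM sumr_const -[ln k *+ _]mulr_natr mulrCA mulVf ?mulr1 ?lnK ?posrE //.
by rewrite pnatr_eq0 -lt0n; apply/card_gt0P; exists t0.
Qed.

Lemma GM_le g h : (forall t, 0 < g t) -> (forall t, g t <= h t) -> GM g <= GM h.
Proof.
move=> gp gh; rewrite /GM ler_expR ler_wpM2l ?invr_ge0 ?ler0n //.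
apply: ler_sum => i _; rewrite ler_ln ?posrE //; exact: (lt_le_trans (gp i)).
Qed.
End GMl.

Lemma maxdiv (R : realType) (a b : R) : 0 < a -> 0 < b ->
  Num.max (a / b) (b / a) = (Num.min a b)^-1 * (Num.min a b)^-1 * (a * b).
Proof.
move=> ha hb; have [ab|ba] := leP a b.
- rewrite max_r; last first.
    apply: (@le_trans _ _ 1); first by rewrite ler_pdivrMr // mul1r.
    by rewrite ler_pdivlMr // mul1r.
  field; by rewrite gt_eqF.
- rewrite max_l; last first.
    apply: (@le_trans _ _ 1); first by rewrite ler_pdivrMr // mul1r ltW.
    by rewrite ler_pdivlMr // mul1r ltW.
  field; by rewrite gt_eqF.
Qed.

Theorem theorem2 (R : realType) (T : finType) (p1 p2 : model R T)
  (f : R -> R -> R) (lam : R) (c : seq T) (t : T) :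
  is_LM p1 -> is_LM p2 -> min_bounded_with f lam ->
  let gamma := lam * fbar f p1 p2 c in
  [/\ le_exposed (DAGG f p1 p2) p1 c t gamma,
      le_exposed (DAGG f p1 p2) p2 c t gamma &
      gamma <= lam * Num.sqrt (MAE p1 p2 c)].
Proof.
move=> [p1p' _] [p2p' _] [pa mb] gamma.
have p1p := p1p' c; have p2p := p2p' c.
have tpp : forall p : model R T, 0 < tp p c by move=> p; exact: GM_gt0.
have rpp : forall p : model R T, (forall i, 0 < p c i) -> forall i, 0 < rp p c i.
  by move=> p pp i; rewrite /rp divr_gt0.
have GMrp : forall p : model R T, (forall i, 0 < p c i) -> GM (rp p c) = 1.
  move=> p pp; rewrite /rp (@GM_M R T (fun i => p c i) (fun _ => (tp p c)^-1)) //.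
    rewrite (@GM_cst R T _ t) ?invr_gt0 //; first by rewrite mulfV // gt_eqF // tpp.
  by move=> _; rewrite invr_gt0.
set M := Mval f p1 p2 c.
have Mp : forall i, 0 < M i.
  move=> i; have /andP[h _] := pa _ _ (rpp _ p1p i) (rpp _ p2p i).
  by apply: lt_le_trans h; rewrite lt_min !rpp.
have Mmin : forall i, Num.min (rp p1 c i) (rp p2 c i) <= M i.
  by move=> i; have /andP[h _] := pa _ _ (rpp _ p1p i) (rpp _ p2p i).
have lam0 : 0 <= lam.
  have h := mb 1 1 ltr01 ltr01; have /andP[h2 _] := pa 1 1 ltr01 ltr01.
  rewrite minxx mulr1 in h; rewrite minxx in h2.
  exact: le_trans ler01 (le_trans h2 h).
have Sp : 0 < \sum_(t' : T) M t'.
  rewrite (bigD1 t) //=; apply: (lt_le_trans (Mp t)).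
  by rewrite lerDl sumr_ge0 // => i _; rewrite ltW.
have GMMp := @GM_gt0 R T M.
have fbarE : fbar f p1 p2 c = (GM M)^-1 by rewrite /fbar GM_V.
have expo : forall p : model R T, (forall i, 0 < p c i) ->
    (forall i, M i <= lam * rp p c i) -> le_exposed (DAGG f p1 p2) p c t gamma.
  move=> p pp Mle.
  eexists; split; last by reflexivity.
  rewrite /tpr /DAGG -/M.
  set S := \sum_(t' : T) M t'.
  have -> : (fun t0 => M t0 / S / p c t0) =
            (fun t0 => M t0 * (fun t1 => S^-1 * (p c t1)^-1) t0).
    by apply/funext => i /=; rewrite mulrA.
  rewrite (@GM_M R T M (fun t1 => S^-1 * (p c t1)^-1)) //; last first.
    by move=> i; rewrite mulr_gt0 // invr_gt0.
  rewrite (@GM_M R T (fun _ => S^-1) (fun t1 => (p c t1)^-1)); last 2 first.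
  - by move=> _; rewrite invr_gt0.
  - by move=> i; rewrite invr_gt0.
  rewrite (@GM_cst R T _ t) ?invr_gt0 // (@GM_V R T (fun i => p c i)) //.
  rewrite -/(tp p c) /gamma fbarE.
  have -> : M t / S / (p c t * (GM M * (S^-1 * (tp p c)^-1))) =
            M t / rp p c t * (GM M)^-1.
    rewrite /rp; field.
    by rewrite !gt_eqF ?tpp ?pp ?GM_gt0.
  rewrite ler_wpM2r //; first by rewrite invr_ge0 ltW.
  by rewrite ler_pdivrMr ?rpp // Mle.
split.
- apply: expo => // i; apply: (le_trans (mb _ _ (rpp _ p1p i) (rpp _ p2p i))).
  by rewrite ler_wpM2l // ge_min lexx.
- apply: expo => // i; apply: (le_trans (mb _ _ (rpp _ p1p i) (rpp _ p2p i))).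
  by rewrite ler_wpM2l // ge_min lexx orbT.
rewrite /gamma ler_wpM2l // fbarE.
set m := fun i => Num.min (rp p1 c i) (rp p2 c i).
have mp : forall i, 0 < m i by move=> i; rewrite /m lt_min !rpp.
have -> : MAE p1 p2 c = GM (fun i => (m i)^-1) ^+ 2.
  rewrite /MAE.
  have -> : (fun i => Num.max (rp p1 c i / rp p2 c i) (rp p2 c i / rp p1 c i)) =
     (fun i => (fun j => (m j)^-1 * (m j)^-1) i * (fun j => rp p1 c j * rp p2 c j) i).
    by apply/funext => i /=; rewrite maxdiv ?rpp.
  rewrite (@GM_M R T (fun j => (m j)^-1 * (m j)^-1) (fun j => rp p1 c j * rp p2 c j)); last 2 first.
  - by move=> i; rewrite mulr_gt0 // invr_gt0.
  - by move=> i; rewrite mulr_gt0 ?rpp.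
  rewrite (@GM_M R T (fun j => (m j)^-1) (fun j => (m j)^-1)); last 2 first.
  - by move=> i; rewrite invr_gt0.
  - by move=> i; rewrite invr_gt0.
  rewrite (@GM_M R T (fun j => rp p1 c j) (fun j => rp p2 c j)); last 2 first.
  - exact: rpp.
  - exact: rpp.
  have E1 : GM (fun j => rp p1 c j) = 1 := GMrp p1 p1p.
  have E2 : GM (fun j => rp p2 c j) = 1 := GMrp p2 p2p.
  by rewrite E1 E2 !mulr1 expr2.
rewrite sqrtr_sqr ger0_norm; last exact: ltW (GM_gt0 _ _ _).
rewrite -GM_V //.
apply: GM_le => i; first by rewrite invr_gt0.
by rewrite lef_pV2 ?posrE // Mmin.
Qed.
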